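(* If $G$ is a graph on $n$ vertices with minimum degree $\delta(G)\ge 2$, then $\gamma_{\rm tg}(G)\le \frac{3}{4}n$.
   Context: For a graph $G$ without isolated vertices, a vertex $x$ totally dominates a vertex $y$ if $x$ and $y$ are adjacent. The total domination game on $G$ is played by two players, Dominator and Staller, who alternately choose vertices of $G$, Dominator choosing first. A vertex may be chosen only if it totally dominates at least one vertex that is not totally dominated by the previously chosen vertices. The game ends when the set of chosen vertices is a total dominating set of $G$, i.e. every vertex of $G$ has a neighbor among the chosen vertices. Dominator wants to minimize the number of chosen vertices and Staller wants to maximize it. The game total domination number $\gamma_{\rm tg}(G)$ is the number of vertices chosen when Dominator starts and both players play optimally. *)

(* Defs.v *)
From mathcomp Require Import all_boot.
Set Implicit Arguments. Unset Strict Implicit. Unset Printing Implicit Defensive.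

Definition simple_graph (T : finType) (e : rel T) : Prop :=
  symmetric e /\ irreflexive e.

Definition nbhd (T : finType) (e : rel T) (v : T) : {set T} := [set u | e v u].

Definition min_deg_ge (T : finType) (e : rel T) (k : nat) : Prop :=
  forall v : T, k <= #|nbhd e v|.

(* v is a legal move when D is the set of already totally dominated
   vertices: v totally dominates some vertex not yet in D. *)
Definition legal (T : finType) (e : rel T) (D : {set T}) (v : T) : bool :=
  ~~ (nbhd e v \subset D).

(* Number of further moves in the total domination game under optimal play,
   from the position where D is the set of totally dominated vertices and
   it is Dominator's turn iff [dom] is true. Only D matters for the rest of
   the game (the legality condition and the end condition depend only on D).
   [fuel] bounds the number of moves; every legal move enlarges D, so
   fuel = #|T|.+1 is always sufficient. *)
Fixpoint tgame (T : finType) (e : rel T) (fuel : nat) (D : {set T}) (dom : bool)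
  : nat :=
  if D == [set: T] then 0 else
  match fuel with
  | 0 => 0
  | f.+1 =>
    if dom then
      (\big[minn/#|T|.+1]_(v | legal e D v) tgame e f (D :|: nbhd e v) false).+1
    else
      (\max_(v | legal e D v) tgame e f (D :|: nbhd e v) true).+1
  end.

Definition game_total_domination_number (T : finType) (e : rel T) : nat :=
  tgame e #|T|.+1 set0 true.

(* Main.v *)
Require Import Defs.
From mathcomp Require Import all_boot.
From mathcomp Require Import zify.
Set Implicit Arguments. Unset Strict Implicit. Unset Printing Implicit Defensive.

Definition pot (T : finType) (e : rel T) (D : {set T}) : nat :=
  2 * #|~: D| + #|[set v | legal e D v]|.
Definition gflag (T : finType) (e : rel T) (D : {set T}) : bool :=
  [exists v, 1 < #|nbhd e v :\: D|].

Lemma legal_deg (T : finType) (e : rel T) (D : {set T}) v :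
  legal e D v = (0 < #|nbhd e v :\: D|).
Proof. by rewrite /legal card_gt0 setD_eq0. Qed.

Lemma compl_step (T : finType) (D N : {set T}) :
  #|~: D| = #|~: (D :|: N)| + #|N :\: D|.
Proof.
have -> : N :\: D = ~: D :&: N by apply/setP=> x; rewrite !inE andbC.
have -> : ~: (D :|: N) = ~: D :\: N by apply/setP=> x; rewrite !inE negb_or andbC.
by rewrite addnC cardsID.
Qed.

Lemma card_sub_diff (T : finType) (L L' S : {set T}) :
  S \subset L -> L' \subset L :\: S -> #|L'| + #|S| <= #|L|.
Proof.
move=> HS HL'. rewrite -(cardsID S L) (setIidPr HS) addnC leq_add2l.
exact: subset_leq_card.
Qed.

Lemma legal_mono (T : finType) (e : rel T) (D D' : {set T}) v :
  D \subset D' -> legal e D' v -> legal e D v.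
Proof.
move=> HD; rewrite /legal; apply: contra => H; exact: subset_trans H HD.
Qed.

Lemma pot_step (T : finType) (e : rel T) (D : {set T}) v (S : {set T}) :
  v \in S -> S \subset [set x | legal e D x] ->
  (forall x, x \in S -> ~~ legal e (D :|: nbhd e v) x) ->
  pot e (D :|: nbhd e v) + 2 * #|nbhd e v :\: D| + #|S| <= pot e D.
Proof.
move=> vS SL Hx. rewrite /pot (compl_step D (nbhd e v)).
have : #|[set x | legal e (D :|: nbhd e v) x]| + #|S| <= #|[set x | legal e D x]|.
  apply: card_sub_diff => //. apply/subsetP => x; rewrite !inE => Hl.
  apply/andP; split; last exact: legal_mono (subsetUl _ _) Hl.
  by apply/negP => /Hx; rewrite Hl.
lia.
Qed.

Lemma chosen_illegal (T : finType) (e : rel T) (D : {set T}) v :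
  ~~ legal e (D :|: nbhd e v) v.
Proof. by rewrite /legal negbK subsetUr. Qed.

Lemma exists_legal (T : finType) (e : rel T) (D : {set T}) :
  simple_graph e -> min_deg_ge e 2 -> D != setT -> exists v, legal e D v.
Proof.
move=> [sym _] Hd HD.
case: (pickP (mem (~: D))) => [u Hu | H0]; last first.
  exfalso; move/negP: HD; apply; apply/eqP/setP => x.
  by have := H0 x; rewrite !inE /=; case: (x \in D).
have : 0 < #|nbhd e u| by have := Hd u; lia.
case/card_gt0P => w; rewrite inE => euw.
exists w; apply/negP => /subsetP /(_ u).
rewrite inE sym euw => /(_ isT); move: Hu; rewrite /= inE => /negP; done.
Qed.

Lemma bigmin_le (T : finType) (P : pred T) (F : T -> nat) K v0 :
  P v0 -> \big[minn/K]_(v | P v) F v <= F v0.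
Proof.
move=> Pv0; have : v0 \in index_enum T by rewrite mem_index_enum.
elim: (index_enum T) => [//|x r IH]; rewrite inE big_cons.
case/orP => [/eqP <-|/IH Hr]; first by rewrite Pv0 geq_minl.
case: (P x) => //; exact: leq_trans (geq_minr _ _) Hr.
Qed.

Lemma main (T : finType) (e : rel T) :
  simple_graph e -> min_deg_ge e 2 -> forall f D,
  4 * tgame e f D true <= pot e D /\
  4 * tgame e f D false <= pot e D + gflag e D.
Proof.
move=> Hs Hd f; elim: f => [|f IH] D /=; first by case: ifP.
case: ifP => [_ //| /negbT HD].
have [sym _] := Hs.
(* degrees monotone *)
have gmono : forall v, ~~ gflag e D -> legal e D v -> ~~ gflag e (D :|: nbhd e v).
  move=> v; rewrite /gflag !negb_exists => /forallP Hg _; apply/forallP => x.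
  rewrite -leqNgt; apply: leq_trans (_ : #|nbhd e x :\: D| <= 1).
    by apply: subset_leq_card; apply: setDS; apply: subsetUl.
  by have := Hg x; rewrite -leqNgt.
have dec1 : forall v, legal e D v ->
    pot e (D :|: nbhd e v) + 2 * #|nbhd e v :\: D| + 1 <= pot e D.
  move=> v Hv; have := @pot_step T e D v [set v].
  rewrite cards1; apply; first by rewrite inE.
    by apply/subsetP => x; rewrite !inE => /eqP ->.
  by move=> x; rewrite inE => /eqP ->; apply: chosen_illegal.
have dec2 : ~~ gflag e D -> forall v, legal e D v ->
    pot e (D :|: nbhd e v) + 4 <= pot e D.
  move=> Hg v Hv.
  have Hg' : forall x, #|nbhd e x :\: D| <= 1.
    move=> x; move: Hg; rewrite /gflag negb_exists => /forallP /(_ x).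
    by rewrite -leqNgt.
  have Hv1 := Hv; rewrite legal_deg in Hv1.
  case/card_gt0P: Hv1 => u; rewrite !inE => /andP [uD evu].
  have : 0 < #|nbhd e u :\ v|.
    have := Hd u; rewrite (cardsD1 v (nbhd e u)); case: (v \in nbhd e u) => /=; lia.
  case/card_gt0P => w; rewrite !inE => /andP [wv euw].
  have wu : e w u by rewrite sym.
  have Hwl : legal e D w by rewrite legal_deg; apply/card_gt0P; exists u; rewrite !inE uD wu.
  have Hwn : ~~ legal e (D :|: nbhd e v) w.
    rewrite /legal negbK; apply/subsetP => x xN.
    rewrite inE; case xD: (x \in D) => //=.
    have xS : x \in nbhd e w :\: D by rewrite inE xD xN.
    have uS : u \in nbhd e w :\: D by rewrite !inE uD wu.
    move: (card_le1P (Hg' w) x xS u); rewrite uS inE => /esym/eqP <-.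
    by rewrite inE.
  have := @pot_step T e D v [set v; w].
  rewrite cards2 eq_sym wv /=.
  have : 0 < #|nbhd e v :\: D| by rewrite -legal_deg.
  move=> H1 H2.
  have : pot e (D :|: nbhd e v) + 2 * #|nbhd e v :\: D| + 2 <= pot e D.
    apply: H2; first by rewrite !inE eqxx.
      by apply/subsetP => x; rewrite !inE => /orP [] /eqP ->.
    by move=> x; rewrite !inE => /orP [] /eqP -> //; apply: chosen_illegal.
  lia.
split.
-
  have [v0 Hv0 Hdec] : exists2 v0, legal e D v0 &
      pot e (D :|: nbhd e v0) + gflag e (D :|: nbhd e v0) + 4 <= pot e D.
    case Hg: (gflag e D).
      case/existsP: Hg => v Hv. have Hl : legal e D v by rewrite legal_deg; lia.
      exists v => //; have := dec1 v Hl; case: (gflag _ _); lia.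
    have [v Hv] := exists_legal Hs Hd HD.
    exists v => //; have := dec2 (negbT Hg) v Hv.
    by rewrite (negbTE (gmono v (negbT Hg) Hv)); lia.
  have := bigmin_le (fun v => tgame e f (D :|: nbhd e v) false) (#|T|.+1) Hv0.
  have [_ H2] := IH (D :|: nbhd e v0).
  move=> Hm; rewrite mulnS; apply: leq_trans (leq_add (leqnn 4) (leq_mul (leqnn 4) Hm)) _; lia.
-
  have H4 : 4 <= pot e D + gflag e D.
    have [v Hv] := exists_legal Hs Hd HD. have := dec1 v Hv.
    case Hg: (gflag e D); last by have := dec2 (negbT Hg) v Hv; lia.
    rewrite legal_deg in Hv; lia.
  set B := pot e D + gflag e D.
  suff : 4 * (\max_(v | legal e D v) tgame e f (D :|: nbhd e v) true) + 4 <= B by lia.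
  apply: (big_ind (fun x => 4 * x + 4 <= B)) => //.
    move=> x y Hx Hy /=; lia.
  move=> v Hv; have [H1 _] := IH (D :|: nbhd e v).
  case Hg: (gflag e D).
    have := dec1 v Hv; rewrite /B Hg legal_deg in Hv *; lia.
  have := dec2 (negbT Hg) v Hv; rewrite /B Hg; lia.
Qed.

Theorem corollary3 (T : finType) (e : rel T) :
  simple_graph e -> min_deg_ge e 2 ->
  4 * game_total_domination_number e <= 3 * #|T|.
Proof.
move=> Hs Hd; have [H _] := main Hs Hd #|T|.+1 set0.
apply: leq_trans H _.
rewrite /pot setC0 cardsT.
suff -> : [set v | legal e set0 v] = [set: T] by rewrite cardsT; lia.
apply/setP => v; rewrite !inE legal_deg setD0; have := Hd v; lia.
Qed.
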